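(* Let $r\geqslant 2$, $\ell\geqslant 1$ and $m=2^r(2^\ell+1)$. Then $\gcd(r,\ell)\leqslant 2$ if and only if, for every pair of distinct roots $\tau_i,\tau_j\in\overline{\mathbb F}_2$ of $(L_1(x^{m-1}))'$, one has $P_\ell(\tau_i+\tau_j)\neq 0$.
   Context: For $k\geqslant 1$, $P_k(x)=x+x^2+\dots+x^{2^{k-1}}$ is the $k$-th trace polynomial. For $m\equiv 0\pmod 4$, $L_1(x^{m-1})$ denotes the unique polynomial $Q$ of degree at most $(m-2)/2$ over $\mathbb F_2$ with $Q(x(x+1))=(x+1)^{m-1}+x^{m-1}$. *)

(* Defs.v *)
From HB Require Import structures.
From mathcomp Require Import all_boot all_order all_algebra all_field.
Set Implicit Arguments. Unset Strict Implicit. Unset Printing Implicit Defensive.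
Import GRing.Theory.
Local Open Scope ring_scope.

Definition mval (r l : nat) : nat := (2 ^ r * (2 ^ l + 1))%N.

Definition tracep (R : nzRingType) (k : nat) : {poly R} :=
  \sum_(i < k) 'X^(2 ^ i).

(* Q is L_1(x^(m-1)): deg Q <= (m-2)/2 and Q(x(x+1)) = (x+1)^(m-1) + x^(m-1) *)
Definition is_L1 (R : comNzRingType) (m : nat) (Q : {poly R}) : Prop :=
  (size Q <= ((m - 2) %/ 2).+1)%N /\
  Q \Po ('X * ('X + 1)) = ('X + 1) ^+ (m - 1) + 'X ^+ (m - 1).

(* Main.v *)
Require Import Defs.
From HB Require Import structures.
From mathcomp Require Import all_boot all_order all_algebra all_field.
From mathcomp Require Import ring.
Import GRing.Theory.
Local Open Scope ring_scope.

Module Helpers.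
Set Implicit Arguments. Unset Strict Implicit.
Section Char2.
Variable F : fieldType.
Hypothesis h2 : (2 \in [pchar F])%N.

Lemma two0 : 2%:R = 0 :> F. Proof. exact: pcharf0 h2. Qed.

Lemma c2lin (L R A1 B1 A2 B2 c1 c2 W : F) : A1 = B1 -> A2 = B2 ->
  L - R = c1 * (A1 - B1) + c2 * (A2 - B2) + 2%:R * W -> L = R.
Proof.
move=> -> ->; rewrite !subrr !mulr0 two0 !mul0r !addr0 => /eqP.
by rewrite subr_eq0 => /eqP.
Qed.

Lemma c2ring (L R W : F) : L - R = 2%:R * W -> L = R.
Proof. by move=> h; apply: (@c2lin L R 0 0 0 0 0 0 W) => //; rewrite h; ring. Qed.

Lemma frob2 (x y : F) : (x + y) ^+ 2 = x ^+ 2 + y ^+ 2.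
Proof. apply: c2ring (x * y) _; ring. Qed.

Lemma frobD k (x y : F) : (x + y) ^+ (2 ^ k) = x ^+ (2 ^ k) + y ^+ (2 ^ k).
Proof.
elim: k => [|k IH]; first by rewrite expn0 !expr1.
by rewrite expnSr !exprM IH frob2.
Qed.

Lemma frob1 k (x : F) : (x + 1) ^+ (2 ^ k) = x ^+ (2 ^ k) + 1.
Proof. by rewrite frobD expr1n. Qed.

Lemma sq_inj (u v : F) : u ^+ 2 = v ^+ 2 -> u = v.
Proof.
move=> h; have : (u + v) ^+ 2 = 0.
  by rewrite frob2 h addrr_pchar2.
move/eqP; rewrite expf_eq0 /= addr_eq0 oppr_pchar2 // => /eqP //.
Qed.

Lemma iterfix k u (z : F) : z ^+ (2 ^ k) = z -> z ^+ (2 ^ (k * u)) = z.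
Proof.
move=> hz; elim: u => [|u IH]; first by rewrite muln0 expn0 expr1.
by rewrite mulnS expnD exprM hz IH.
Qed.

Lemma fixg r l (z : F) : (0 < r)%N -> z ^+ (2 ^ r) = z -> z ^+ (2 ^ l) = z ->
  z ^+ (2 ^ gcdn r l) = z.
Proof.
move=> r0 hr hl; have [a _ /dvdnP [k hk]] := Bezoutl l r0.
have e1 : z ^+ (2 ^ (gcdn r l + a * l)) = z by rewrite hk mulnC iterfix.
by rewrite expnD mulnC exprM mulnC iterfix in e1.
Qed.

Lemma fix4 r l (z : F) : (0 < r)%N -> (gcdn r l <= 2)%N ->
  z ^+ (2 ^ r) = z -> z ^+ (2 ^ l) = z -> z ^+ 4 = z.
Proof.
move=> r0 g2 hr hl; have := @fixg r l z r0 hr hl.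
have : (0 < gcdn r l)%N by rewrite gcdn_gt0 r0.
case: (gcdn r l) g2 => [|[|[|g]]] //= _ _.
- by rewrite expn1 => h; rewrite (_ : 4 = 2 * 2)%N // exprM h h.
Qed.

Definition rc (m : nat) (x : F) := (x + 1) ^+ (m - 2) = x ^+ (m - 2).

Lemma mval_eq r l : (2 <= r)%N ->
  (mval r l = (2 ^ (r.-1) * (2 ^ l + 1)) * 2 /\ 0 < 2 ^ (r.-1) * (2 ^ l + 1))%N.
Proof.
move=> hr; split; last by rewrite muln_gt0 expn_gt0 addn1.
by rewrite /mval mulnAC -expnSr prednK // (leq_trans _ hr).
Qed.

Lemma rc_nz r l x : (2 <= r)%N -> rc (mval r l) x -> x != 0 /\ x + 1 != 0.
Proof.
move=> hr; rewrite /rc; have [-> hN] := @mval_eq r l hr.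
set N := (2 ^ r.-1 * (2 ^ l + 1))%N.
have hp : (0 < N * 2 - 2)%N.
  have h1 : (1 < N)%N.
    by apply: (@leq_mul 1 2); rewrite ?expn_gt0 // addn1 ltnS expn_gt0.
  by rewrite -[X in (_ - X)%N]mul1n -mulnBl muln_gt0 subn_gt0 h1.
have hp' : (N * 2 - 2 == 0)%N = false by rewrite eqn0Ngt hp.
move=> h; split; apply/negP => /eqP h0.
- by move: h; rewrite h0 add0r expr1n expr0n hp' => /eqP; rewrite oner_eq0.
- move: h; rewrite h0 expr0n hp' => /esym/eqP; rewrite expf_eq0 hp /= => /eqP hx.
  by move: h0; rewrite hx add0r => /eqP; rewrite oner_eq0.
Qed.

Lemma rcE r l x : (2 <= r)%N -> rc (mval r l) x ->
  x * (x ^+ (2 ^ r.-1)) ^+ (2 ^ l) + x * x ^+ (2 ^ r.-1) + x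
   = (x ^+ (2 ^ r.-1)) ^+ (2 ^ l) * x ^+ (2 ^ r.-1).
Proof.
move=> hr; rewrite /rc; have [-> hN] := @mval_eq r l hr.
set N := (2 ^ r.-1 * (2 ^ l + 1))%N.
rewrite -[X in (_ - X)%N]mul1n -mulnBl subn1 !exprM => /sq_inj h.
have E0 : x * (x + 1) ^+ N.-1.+1 = (x + 1) * x ^+ N.-1.+1.
  by rewrite !exprS h; ring.
move: E0; rewrite prednK // /N !exprM !frob1 !exprD !expr1 => E0.
rewrite frob1 in E0.
move: E0; set a := x ^+ (2 ^ r.-1); set b := a ^+ (2 ^ l) => E0.
by apply: (@c2lin _ _ _ _ 0 0 1 0 0 E0) => //; ring.
Qed.

Lemma f4 (z : F) : z != 0 -> z + 1 != 0 -> z ^+ 4 = z -> z ^+ 2 + z + 1 = 0.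
Proof.
move=> z0 z1 h4.
have : z * (z + 1) * (z ^+ 2 + z + 1) = 0.
  by apply: (@c2lin _ _ _ _ 0 0 1 0 (z ^+ 3 + z ^+ 2 + z) h4) => //; ring.
by move/eqP; rewrite !mulf_eq0 (negbTE z0) (negbTE z1) /= => /eqP.
Qed.

Lemma core r l x y : (2 <= r)%N -> (gcdn r l <= 2)%N ->
  rc (mval r l) x -> rc (mval r l) y ->
  x + y != 0 -> x + y + 1 != 0 -> (x + y) ^+ (2 ^ l) = x + y -> False.
Proof.
move=> hr hg hx hy.
have [x0 x1] := rc_nz hr hx; have [y0 y1] := rc_nz hr hy.
have Ex := rcE hr hx; have Ey := rcE hr hy.
set d := x + y; set q := (2 ^ r.-1)%N; set Q := (2 ^ l)%N.
have hyd : y = x + d by rewrite /d addrA addrr_pchar2 // add0r.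
rewrite hyd -/q -/Q in Ey; move=> d0 d1 hdQ.
move: Ex Ey; set A := x ^+ q; set B := A ^+ Q => Ex.
set e := d ^+ q.
have he : e ^+ Q = e by rewrite /e -!exprM mulnC exprM hdQ.
rewrite frobD frobD -/A -/e -/B he => Ey.
have S1 : d * (B + A + 1) = e * (A + B) + e ^+ 2.
  by apply: (@c2lin _ _ _ _ _ _ 1 (-1) (-(x * e + d * e)) Ey Ex); ring.
have [hde|hde] := eqVneq d e.
  rewrite -hde in S1.
  have : d * (d + 1) = 0.
    by apply: (@c2lin _ _ _ _ 0 0 (-1) 0 d S1) => //; ring.
  by move/eqP; rewrite mulf_eq0 (negbTE d0) (negbTE d1).
have dene : d + e != 0.
  by apply: contra hde; rewrite addr_eq0 oppr_pchar2.
set s := B + A.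
have S1' : (d + e) * s = e ^+ 2 + d.
  by apply: (@c2lin _ _ _ _ 0 0 1 0 (e * (A + B) - d) S1) => //; rewrite /s; ring.
have hsQ : s ^+ Q = s.
  apply: (mulfI dene).
  have := congr1 (fun z => z ^+ Q) S1'; rewrite /= exprMn (frobD _ d e) (frobD _ (e ^+ 2) d) -/Q hdQ he.
  by rewrite exprAC he S1'.
have hBQ : B ^+ Q = A.
  by move: hsQ; rewrite /s frobD -/Q -/B [_ + B]addrC => /addrI.
have Ex' : x * (s + 1) = B * A by rewrite -Ex /s; ring.
have s1 : s + 1 != 0.
  apply/negP => /eqP s1; move: Ex'; rewrite s1 mulr0 => /esym/eqP.
  rewrite mulf_eq0 /B /A !expf_eq0 (negbTE x0) !andbF.
  done.
have hxQ : x ^+ Q = x.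
  apply: (mulIf s1).
  have := congr1 (fun z => z ^+ Q) Ex'; rewrite /= !exprMn frob1 -/Q hsQ hBQ.
  by rewrite -/B => ->; rewrite Ex' mulrC.
have hBA : B = A by rewrite /B /A -exprM mulnC exprM hxQ.
have s0 : s = 0 by rewrite /s hBA addrr_pchar2.
have hde2 : d = e ^+ 2.
  by move: S1'; rewrite s0 mulr0 => /esym/eqP; rewrite addr_eq0 oppr_pchar2 // => /eqP.
have hxA : x = A ^+ 2.
  by move: Ex; rewrite hBA addrr_pchar2 // add0r.
have h2r : (2 ^ r = q * 2)%N by rewrite /q -expnSr prednK // (leq_trans _ hr).
have xr : x ^+ (2 ^ r) = x by rewrite h2r exprM -/A -hxA.
have dr : d ^+ (2 ^ r) = d by rewrite h2r exprM -/e -hde2.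
have r0 : (0 < r)%N by rewrite (leq_trans _ hr).
have x4 := fix4 r0 hg xr hxQ.
have d4 := fix4 r0 hg dr hdQ.
have fx := f4 x0 x1 x4; have fd := f4 d0 d1 d4.
have : (x + d) * (x + d + 1) = 0.
  by apply: (@c2lin _ _ _ _ _ _ 1 1 (x * d - 1) fx fd); ring.
by move/eqP; rewrite mulf_eq0 -hyd (negbTE y0) (negbTE y1).
Qed.

Lemma rc_of r l x : (2 <= r)%N -> x != 0 -> x + 1 != 0 ->
  x ^+ (2 ^ r) = x -> x ^+ (2 ^ l) = x -> rc (mval r l) x.
Proof.
move=> hr x0 x1 hxr hxl.
have pw : forall z : F, z != 0 -> z ^+ (2 ^ r) = z -> z ^+ (2 ^ l) = z ->
    z ^+ (mval r l - 2) = 1.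
  move=> z z0 zr zl.
  have m2 : (2 <= mval r l)%N.
    have [-> hN] := @mval_eq r l hr.
    by rewrite -[X in (X <= _)%N]mul1n leq_mul2r hN orbT.
  have e : z ^+ (mval r l - 2) * z ^+ 2 = 1 * z ^+ 2.
    rewrite -exprD subnK // mul1r /mval mulnDr muln1 exprD exprM zr zl.
    by rewrite expr2.
  by apply: (mulIf _ e); rewrite expf_neq0.
rewrite /rc (pw (x + 1)) ?(pw x) //; first by rewrite frob1 hxr.
by rewrite frob1 hxl.
Qed.

Lemma trace_eval l (y : F) : (tracep F l).[y ^+ 2 + y] = y ^+ (2 ^ l) + y.
Proof.
elim: l => [|l IH].
  by rewrite /tracep big_ord0 horner0 expn0 expr1 addrr_pchar2.
rewrite /tracep big_ord_recr /= hornerD -/(tracep F l) IH hornerXn frobD.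
rewrite -exprM -expnS.
apply: (@c2ring _ _ (y ^+ (2 ^ l))); ring.
Qed.

End Char2.

Section Closed.
Variable F : closedFieldType.
Hypothesis h2 : (2 \in [pchar F])%N.

Lemma preim (t : F) : exists x, x * (x + 1) = t.
Proof.
have : size ('X^2 + 'X - t%:P : {poly F}) != 1%N.
  rewrite -addrA size_polyDl ?size_polyXn //.
  apply: (leq_ltn_trans (size_polyD _ _)).
  by rewrite size_polyX size_polyN size_polyC; case: (t != 0).
move/closed_rootP => [x]; rewrite /root !hornerE => /eqP h.
exists x; apply/eqP; rewrite -subr_eq0 -h; apply/eqP; ring.
Qed.

Lemma keyeval r l (Q : {poly F}) (x : F) : (2 <= r)%N -> is_L1 (mval r l) Q ->
  Q^`().[x * (x + 1)] = (x + 1) ^+ (mval r l - 2) + x ^+ (mval r l - 2).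
Proof.
move=> hr [_ hQ]; have := congr1 (fun p => p^`().[x]) hQ.
rewrite /= deriv_comp hornerM horner_comp.
rewrite !(derivE, deriv_exp) !hornerE !hornerMn hornerXn horner_exp !hornerE.
have -> : x + 1 + x = 1 by apply: (c2ring h2 (W:=x)); ring.
have hm1 : ((mval r l - 1)%:R : F) = 1.
  have [-> ] := @mval_eq r l hr.
  move: (2 ^ r.-1 * (2 ^ l + 1))%N => N hN.
  have -> : (N * 2 - 1 = N.-1 * 2 + 1)%N.
    by rewrite -{1}(prednK hN) mulSn addnC -addnBA.
  by rewrite natrD natrM (two0 h2) mulr0 add0r.
by rewrite -[X in _ = X + _]mulr_natr -[X in _ = _ + X]mulr_natr hm1 !mulr1 -subnS => <-.
Qed.

Lemma pickz (s t : seq F) : uniq s -> (size t < size s)%N ->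
  exists2 z, z \in s & z \notin t.
Proof.
move=> us hst; case: (boolP (all (mem t) s)) => [/allP sub | /allPn [z zs zt]].
  by have := uniq_leq_size us sub; rewrite leqNgt hst.
by exists z.
Qed.

Lemma c2eq (a b : F) : (a + b == 0) = (a == b).
Proof. by rewrite addr_eq0 oppr_pchar2. Qed.

Lemma many g : (3 <= g)%N -> exists x y : F,
  x ^+ (2 ^ g) = x /\ y ^+ (2 ^ g) = y /\ x != 0 /\ x + 1 != 0 /\
      y != 0 /\ y + 1 != 0 /\ x + y != 0 /\ x + y + 1 != 0.
Proof.
move=> hg; set n := (2 ^ g)%N.
have n8 : (8 <= n)%N by rewrite /n -[8%N]/(2 ^ 3)%N leq_exp2l.
set p : {poly F} := 'X^n - 'X.
have [rs hp] := closed_field_poly_normal p.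
have szX : (size (- 'X : {poly F}) < size ('X^n : {poly F}))%N.
  by rewrite size_polyN size_polyX size_polyXn ltnS (leq_trans _ n8).
have lp : lead_coef p = 1 by rewrite /p lead_coefDl // lead_coefXn.
rewrite lp scale1r in hp.
have sp : size p = n.+1 by rewrite /p size_polyDl // size_polyXn.
have srs : size rs = n by apply: succn_inj; rewrite -sp hp size_prod_XsubC.
have urs : uniq rs.
  have h2p : (2 \in [pchar {poly F}])%N by rewrite pchar_poly.
  rewrite -separable_prod_XsubC -hp unlock /p !derivE.
  have -> : ('X^(n.-1) *+ n : {poly F}) = 0.
    rewrite -mulr_natr /n -(prednK (ltnW (leq_trans _ hg))) // expnS natrM.
    by rewrite (pcharf0 h2p) mul0r mulr0.
  by rewrite sub0r (oppr_pchar2 h2p (1 : {poly F})) coprimep1.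
have inr : forall z, z \in rs -> z ^+ n = z.
  move=> z; rewrite -root_prod_XsubC -hp /root /p !hornerE.
  by rewrite subr_eq0 => /eqP.
have [x xr xt] : exists2 z, z \in rs & z \notin [:: 0; 1].
  by apply: pickz; rewrite // srs (leq_trans _ n8).
have [y yr yt] : exists2 z, z \in rs & z \notin [:: 0; 1; x; x + 1].
  by apply: pickz; rewrite // srs (leq_trans _ n8).
move: xt yt; rewrite !inE !negb_or => /andP [x0 x1] /and4P [y0 y1 yx yx1].
exists x, y; do ! split; rewrite ?inr //.
- by rewrite c2eq.
- by rewrite c2eq.
- by rewrite c2eq eq_sym.
- by rewrite -addrAC c2eq eq_sym.
Qed.

End Closed.
End Helpers.
Import Helpers.

Theorem proposition3p4 (F : closedFieldType) (h2 : (2 \in [pchar F])%N)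
  (r l : nat) (hr : (2 <= r)%N) (hl : (1 <= l)%N)
  (Q : {poly F}) (hQ : is_L1 (mval r l) Q) :
  (gcdn r l <= 2)%N <->
  (forall ti tj : F, root Q^`() ti -> root Q^`() tj -> ti != tj ->
     (tracep F l).[ti + tj] != 0).
Proof.
have e1 : forall a b : F,
    a * (a + 1) + b * (b + 1) = (a + b) ^+ 2 + (a + b).
  by move=> a b; apply: (c2ring h2 (W := - (a * b))); ring.
have rootE : forall x : F, root Q^`() (x * (x + 1)) =
    ((x + 1) ^+ (mval r l - 2) == x ^+ (mval r l - 2)).
  by move=> x; rewrite /root (keyeval h2 x hr hQ) (c2eq h2).
split.
- move=> hg ti tj hi hj hij.
  have [xi hxi] := preim ti; have [xj hxj] := preim tj.
  move: hi hj hij; rewrite -hxi -hxj !rootE => /eqP hi /eqP hj hij.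
  have hdd : (xi + xj) ^+ 2 + (xi + xj) = (xi + xj) * (xi + xj + 1) by ring.
  rewrite e1 (trace_eval h2); apply/negP; rewrite (c2eq h2) => /eqP hdl.
  move: hij; rewrite -[xi * _ == _](c2eq h2) e1 hdd mulf_eq0 negb_or => /andP [d0 d1].
  exact: (core h2 hr hg hi hj d0 d1 hdl).
- move=> H; rewrite leqNgt; apply/negP => hg3.
  have [x [y [xg [yg [x0 [x1 [y0 [y1 [d0 d1]]]]]]]]] := many h2 hg3.
  have [kr hkr] := dvdnP (dvdn_gcdl r l).
  have [kl hkl] := dvdnP (dvdn_gcdr r l).
  have fr : forall z : F, z ^+ (2 ^ gcdn r l) = z -> z ^+ (2 ^ r) = z.
    by move=> z hz; have := iterfix kr hz; rewrite mulnC -hkr.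
  have fl : forall z : F, z ^+ (2 ^ gcdn r l) = z -> z ^+ (2 ^ l) = z.
    by move=> z hz; have := iterfix kl hz; rewrite mulnC -hkl.
  have hx := rc_of h2 hr x0 x1 (fr _ xg) (fl _ xg).
  have hy := rc_of h2 hr y0 y1 (fr _ yg) (fl _ yg).
  have := H (x * (x + 1)) (y * (y + 1)).
  move: (hx) (hy); rewrite /rc => hx' hy'.
  rewrite !rootE hx' hy' !eqxx => /(_ isT isT).
  have hdd : (x + y) ^+ 2 + (x + y) = (x + y) * (x + y + 1) by ring.
  rewrite e1 (trace_eval h2) (frobD h2) (fl _ xg) (fl _ yg) (addrr_pchar2 h2) eqxx /=.
  move=> hf; suff : x * (x + 1) != y * (y + 1) by move/hf.
  by rewrite -[x * _ == _](c2eq h2) e1 hdd mulf_neq0.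
Qed.
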